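(* Let $R$ be a subring of $\bar{\mathbb{Q}}$ and let $S\subset\mathbb{N}$ be an infinite subset. Then there is no ideal $I$ of $R[q]$ such that the identity of $R[q]$ induces an isomorphism $R[q]^S\cong\varprojlim_j R[q]/I^j$.
   Context: $q$ is an indeterminate. For $n\in\mathbb{N}$, $\Phi_n(q)$ is the $n$th cyclotomic polynomial; for $S\subset\mathbb{N}$, $\Phi_S^*$ is the multiplicative subset of $\mathbb{Z}[q]$ generated by $\{\Phi_m(q):m\in S\}$, directed by divisibility, and $R[q]^S=\varprojlim_{f\in\Phi_S^*}R[q]/(f)$. *)

(* Defs.v *)
(* R is a subring of algC (= \bar Q), R[q] is realised as the
   polynomials over algC with coefficients in R. *)
From mathcomp Require Import all_boot all_order all_algebra all_field.
Set Implicit Arguments. Unset Strict Implicit. Unset Printing Implicit Defensive.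
Import Order.TTheory GRing.Theory Num.Theory.
Local Open Scope ring_scope.

Definition PhiC (m : nat) : {poly algC} := map_poly (intr : int -> algC) 'Phi_m.

Definition inRq (R : {pred algC}) (p : {poly algC}) : Prop := p \is a polyOver R.

Definition dvdRq (R : {pred algC}) (f g : {poly algC}) : Prop :=
  exists2 h, inRq R h & g = h * f.

Definition PhiS (S : nat -> Prop) (f : {poly algC}) : Prop :=
  exists s : seq nat, (forall m, m \in s -> S m) /\ f = \prod_(m <- s) PhiC m.

Definition is_ideal (R : {pred algC}) (I : {poly algC} -> Prop) : Prop :=
  [/\ forall p, I p -> inRq R p,
      I 0,
      forall p r, I p -> I r -> I (p + r)
    & forall a p, inRq R a -> I p -> I (a * p)].

Fixpoint ideal_pow (R : {pred algC}) (I : {poly algC} -> Prop) (j : nat)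
  : {poly algC} -> Prop :=
  match j with
  | 0 => inRq R
  | j'.+1 => fun p => exists n (a b : 'I_n -> {poly algC}),
       (forall k, ideal_pow R I j' (a k) /\ I (b k)) /\ p = \sum_(k < n) a k * b k
  end.

(* Elements of R[q]^S = lim_{f in Phi_S^*} R[q]/(f): compatible families. *)
Definition complS (R : {pred algC}) (S : nat -> Prop)
  (x : {poly algC} -> {poly algC}) : Prop :=
  (forall f, PhiS S f -> inRq R (x f)) /\
  (forall f g, PhiS S f -> PhiS S g -> dvdRq R f g -> dvdRq R f (x g - x f)).

Definition eqS (R : {pred algC}) (S : nat -> Prop)
  (x x' : {poly algC} -> {poly algC}) : Prop :=
  forall f, PhiS S f -> dvdRq R f (x f - x' f).

(* Elements of lim_j R[q]/I^j: compatible families. *)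
Definition complI (R : {pred algC}) (I : {poly algC} -> Prop)
  (y : nat -> {poly algC}) : Prop :=
  (forall j, inRq R (y j)) /\
  (forall j k, (j <= k)%N -> ideal_pow R I j (y k - y j)).

Definition eqI (R : {pred algC}) (I : {poly algC} -> Prop)
  (y y' : nat -> {poly algC}) : Prop :=
  forall j, ideal_pow R I j (y j - y' j).

(* The identity of R[q] induces a map R[q]^S -> lim R[q]/I^j (this requires,
   for each j, some F j in Phi_S^* lying in I^j; the induced map is
   x |-> (j |-> x (F j))), and this map is bijective. *)
Definition induced_iso_S_to_I (R : {pred algC}) (S : nat -> Prop)
  (I : {poly algC} -> Prop) : Prop :=
  exists F : nat -> {poly algC},
    (forall j, PhiS S (F j) /\ ideal_pow R I j (F j)) /\
    (forall x x', complS R S x -> complS R S x' ->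
        eqI R I (fun j => x (F j)) (fun j => x' (F j)) -> eqS R S x x') /\
    (forall y, complI R I y ->
        exists2 x, complS R S x & eqI R I (fun j => x (F j)) y).

(* The identity of R[q] induces a map lim R[q]/I^j -> R[q]^S (this requires,
   for each f in Phi_S^*, some G f with I^(G f) contained in (f); the induced
   map is y |-> (f |-> y (G f))), and this map is bijective. *)
Definition induced_iso_I_to_S (R : {pred algC}) (S : nat -> Prop)
  (I : {poly algC} -> Prop) : Prop :=
  exists G : {poly algC} -> nat,
    (forall f, PhiS S f -> forall p, ideal_pow R I (G f) p -> dvdRq R f p) /\
    (forall y y', complI R I y -> complI R I y' ->
        eqS R S (fun f => y (G f)) (fun f => y' (G f)) -> eqI R I y y') /\
    (forall x, complS R S x ->
        exists2 y, complI R I y & eqS R S (fun f => y (G f)) x).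

(* "the identity of R[q] induces an isomorphism R[q]^S ~= lim_j R[q]/I^j",
   read in either direction. *)
Definition id_induces_iso (R : {pred algC}) (S : nat -> Prop)
  (I : {poly algC} -> Prop) : Prop :=
  induced_iso_S_to_I R S I \/ induced_iso_I_to_S R S I.

(* Main.v *)
Require Import Defs.
From mathcomp Require Import all_boot all_order all_algebra all_field.
From Stdlib Require Import ClassicalEpsilon FunctionalExtensionality Classical.
From mathcomp Require Import zify ring.
Import Order.TTheory GRing.Theory Num.Theory.
Local Open Scope ring_scope.
Set Implicit Arguments. Unset Strict Implicit. Unset Printing Implicit Defensive.


Lemma R_0 (R : {pred algC}) : subring_closed R -> 0 \in R.
Proof. by case=> R1 RB _; rewrite -(subrr 1) RB. Qed.
Lemma R_1 (R : {pred algC}) : subring_closed R -> 1 \in R.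
Proof. by case. Qed.
Lemma R_B (R : {pred algC}) : subring_closed R -> forall u v, u \in R -> v \in R -> u - v \in R.
Proof. by case=> _ RB _ u v Hu Hv; apply: RB. Qed.
Lemma R_M (R : {pred algC}) : subring_closed R -> forall u v, u \in R -> v \in R -> u * v \in R.
Proof. by case=> _ _ RM u v Hu Hv; apply: RM. Qed.
Lemma R_N (R : {pred algC}) : subring_closed R -> forall u, u \in R -> - u \in R.
Proof. by move=> Rr u Hu; rewrite -sub0r R_B // R_0. Qed.
Lemma R_D (R : {pred algC}) : subring_closed R -> forall u v, u \in R -> v \in R -> u + v \in R.
Proof. by move=> Rr u v Hu Hv; rewrite -[v]opprK R_B // R_N. Qed.
Lemma R_nat (R : {pred algC}) : subring_closed R -> forall n : nat, n%:R \in R.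
Proof. move=> Rr; elim=> [|n IH]; first exact: R_0. by rewrite mulrSr R_D // R_1. Qed.
Lemma R_int (R : {pred algC}) : subring_closed R -> forall z : int, z%:~R \in R.
Proof. move=> Rr [n|n]; first exact: R_nat. by rewrite NegzE mulrNz R_N // R_nat. Qed.

Lemma pOP (R : {pred algC}) : subring_closed R -> forall p : {poly algC},
  reflect (forall i, p`_i \in R) (p \is a polyOver R).
Proof.
move=> Rr p; apply: (iffP allP) => [H i | H x /(nthP 0) [i _ <-]]; last exact: H.
case: (ltnP i (size p)) => [lt|le]; first by apply: H; apply: mem_nth.
by rewrite nth_default // R_0.
Qed.


Lemma pO_coef (R : {pred algC}) : subring_closed R -> forall (p : {poly algC}) i,
  p \is a polyOver R -> p`_i \in R.
Proof. by move=> Rr p i /(pOP Rr). Qed.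

Lemma pO_B (R : {pred algC}) : subring_closed R -> forall p q : {poly algC},
  p \is a polyOver R -> q \is a polyOver R -> p - q \is a polyOver R.
Proof. by move=> Rr p q Hp Hq; apply/(pOP Rr) => i; rewrite coefB R_B // pO_coef. Qed.
Lemma pO_D (R : {pred algC}) : subring_closed R -> forall p q : {poly algC},
  p \is a polyOver R -> q \is a polyOver R -> p + q \is a polyOver R.
Proof. by move=> Rr p q Hp Hq; apply/(pOP Rr) => i; rewrite coefD R_D // pO_coef. Qed.
Lemma pO_N (R : {pred algC}) : subring_closed R -> forall p : {poly algC},
  p \is a polyOver R -> - p \is a polyOver R.
Proof. by move=> Rr p Hp; apply/(pOP Rr) => i; rewrite coefN R_N // pO_coef. Qed.
Lemma pO_M (R : {pred algC}) : subring_closed R -> forall p q : {poly algC},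
  p \is a polyOver R -> q \is a polyOver R -> p * q \is a polyOver R.
Proof.
move=> Rr p q Hp Hq; apply/(pOP Rr) => i; rewrite coefM.
apply: (big_ind (fun x => x \in R)) => [|x y|j _]; first exact: R_0.
  exact: R_D.
by rewrite R_M // pO_coef.
Qed.
Lemma pO_C (R : {pred algC}) : subring_closed R -> forall c, c \in R -> c%:P \is a polyOver R.
Proof. by move=> Rr c Hc; apply/(pOP Rr) => i; rewrite coefC; case: eqP => // _; apply: R_0. Qed.
Lemma pO_0 (R : {pred algC}) : subring_closed R -> (0 : {poly algC}) \is a polyOver R.
Proof. by move=> Rr; rewrite -polyC0 pO_C // R_0. Qed.
Lemma pO_1 (R : {pred algC}) : subring_closed R -> (1 : {poly algC}) \is a polyOver R.
Proof. by move=> Rr; rewrite -polyC1 pO_C // R_1. Qed.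
Lemma pO_nat (R : {pred algC}) : subring_closed R -> forall n : nat, (n%:R : {poly algC}) \is a polyOver R.
Proof. by move=> Rr n; rewrite -polyC_natr pO_C // R_nat. Qed.
Lemma pO_X (R : {pred algC}) : subring_closed R -> ('X : {poly algC}) \is a polyOver R.
Proof. by move=> Rr; apply/(pOP Rr) => i; rewrite coefX R_nat. Qed.
Lemma pO_int (R : {pred algC}) : subring_closed R -> forall q : {poly int},
  map_poly (intr : int -> algC) q \is a polyOver R.
Proof. by move=> Rr q; apply/(pOP Rr) => i; rewrite coef_map R_int. Qed.
Lemma pO_sum (R : {pred algC}) : subring_closed R -> forall (a b : nat) (F : nat -> {poly algC}),
  (forall k, F k \is a polyOver R) -> \sum_(a <= k < b) F k \is a polyOver R.
Proof.
move=> Rr a b F HF; apply: (big_ind (fun x => x \is a polyOver R)) => //.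
  exact: pO_0. exact: pO_D.
Qed.
Lemma pO_X_ (R : {pred algC}) : subring_closed R -> forall (p : {poly algC}) n,
  p \is a polyOver R -> p ^+ n \is a polyOver R.
Proof. move=> Rr p n Hp; elim: n => [|n IH]; first exact: pO_1. by rewrite exprS pO_M. Qed.
Lemma pO_prod (R : {pred algC}) : subring_closed R -> forall (I : Type) (s : seq I) (P : pred I) (F : I -> {poly algC}),
  (forall k, F k \is a polyOver R) -> \prod_(k <- s | P k) F k \is a polyOver R.
Proof.
move=> Rr I s P F HF; apply: (big_ind (fun x => x \is a polyOver R)) => //.
  exact: pO_1. exact: pO_M.
Qed.
Lemma pO_PhiC (R : {pred algC}) : subring_closed R -> forall m, PhiC m \is a polyOver R.
Proof. by move=> Rr m; apply: pO_int. Qed.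


Lemma dvdR_0 (R : {pred algC}) : subring_closed R -> forall f, dvdRq R f 0.
Proof. by move=> Rr f; exists 0; rewrite ?mul0r //; apply: pO_0. Qed.
Lemma dvdR_B (R : {pred algC}) : subring_closed R -> forall f p q,
  dvdRq R f p -> dvdRq R f q -> dvdRq R f (p - q).
Proof. by move=> Rr f p q [h1 H1 ->] [h2 H2 ->]; exists (h1 - h2); [exact: pO_B | by rewrite mulrBl]. Qed.
Lemma dvdR_D (R : {pred algC}) : subring_closed R -> forall f p q,
  dvdRq R f p -> dvdRq R f q -> dvdRq R f (p + q).
Proof. by move=> Rr f p q [h1 H1 ->] [h2 H2 ->]; exists (h1 + h2); [exact: pO_D | by rewrite mulrDl]. Qed.
Lemma dvdR_N (R : {pred algC}) : subring_closed R -> forall f p,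
  dvdRq R f p -> dvdRq R f (- p).
Proof. by move=> Rr f p [h1 H1 ->]; exists (- h1); [exact: pO_N | by rewrite mulNr]. Qed.
Lemma dvdR_M (R : {pred algC}) : subring_closed R -> forall f a p,
  a \is a polyOver R -> dvdRq R f p -> dvdRq R f (a * p).
Proof. by move=> Rr f a p Ha [h1 H1 ->]; exists (a * h1); [exact: pO_M | by rewrite mulrA]. Qed.
Lemma dvdR_trans (R : {pred algC}) : subring_closed R -> forall f g p,
  dvdRq R f g -> dvdRq R g p -> dvdRq R f p.
Proof. by move=> Rr f g p [h1 H1 ->] [h2 H2 ->]; exists (h2 * h1); [exact: pO_M | by rewrite mulrA]. Qed.
Lemma dvdR_sum (R : {pred algC}) : subring_closed R -> forall f (a b : nat) (F : nat -> {poly algC}),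
  (forall k, (a <= k)%N -> (k < b)%N -> dvdRq R f (F k)) -> dvdRq R f (\sum_(a <= k < b) F k).
Proof.
move=> Rr f a b F HF; rewrite big_nat_cond.
apply: (big_ind (dvdRq R f)) => [|x y|k /andP[/andP[H1 H2] _]]; first exact: dvdR_0.
  exact: dvdR_D.
exact: HF.
Qed.
Lemma dvdR_dvdp (R : {pred algC}) f g : dvdRq R f g -> f %| g.
Proof. by case=> h _ ->; apply: dvdp_mulIr. Qed.

Lemma dvdR_monic (R : {pred algC}) : subring_closed R -> forall f g : {poly algC},
  f \is monic -> f \is a polyOver R -> g \is a polyOver R -> f %| g -> dvdRq R f g.
Proof.
move=> Rr f g mf Rf; elim: {g}(size g) {-2}g (leqnn (size g)) => [|n IH] g.
  by rewrite leqn0 size_poly_eq0 => /eqP -> _ _; apply: dvdR_0.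
move=> sg Rg dg; have [->|g0] := eqVneq g 0; first exact: dvdR_0.
have sfg := dvdp_leq g0 dg.
set d := (size g - size f)%N; set c := lead_coef g.
have Rc : c \in R by rewrite /c lead_coefE pO_coef.
set p := (c *: 'X^d) * f.
have c0 : c != 0 by rewrite lead_coef_eq0.
have Xd0 : c *: 'X^d != 0 by rewrite scaler_eq0 negb_or c0 /= monic_neq0 // monicXn.
have sp : size p = size g.
  rewrite /p size_Mmonic // size_scale // size_polyXn /d.
  have f0 : (0 < size f)%N by rewrite size_poly_gt0 monic_neq0.
  by rewrite addSn /= subnK.
have lp : lead_coef p = c by rewrite /p lead_coef_Mmonic // lead_coefZ lead_coefXn mulr1.
have Rp : p \is a polyOver R by rewrite /p -mul_polyC pO_M // pO_M // ?pO_C // pO_X_ // pO_X.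
have sg' : (size (g - p)%R <= n)%N.
  apply/leq_sizeP => j lenj.
  have gpos : (0 < size g)%N by rewrite size_poly_gt0.
  case: (ltnP j (size g)) => [ltj2|lej2].
    have -> : j = (size g).-1 by lia.
    rewrite coefB -/(lead_coef g) -/c.
    by rewrite -sp -lead_coefE lp subrr.
  by rewrite coefB !nth_default ?subrr // sp.
have dp : f %| p by apply: dvdp_mulIr.
have [h Rh eh] := IH (g - p) sg' (pO_B Rr Rg Rp) (dvdp_sub dg dp).
exists (h + c *: 'X^d); first by rewrite /inRq pO_D // -mul_polyC pO_M // ?pO_C // pO_X_ // pO_X.
by rewrite mulrDl -eh subrK.
Qed.


Lemma IP_R (R : {pred algC}) (I : {poly algC} -> Prop) : subring_closed R -> is_ideal R I ->
  forall j p, ideal_pow R I j p -> inRq R p.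
Proof.
move=> Rr [Isub _ _ _]; elim=> [|j IHj] p //= [n [a [b [H ->]]]].
apply: (big_ind (fun x => x \is a polyOver R)); [exact: pO_0 | exact: pO_D |].
move=> k _; have [Ha Hb] := H k; exact: (pO_M Rr (IHj _ Ha) (Isub _ Hb)).
Qed.

Lemma IP_0 (R : {pred algC}) (I : {poly algC} -> Prop) : subring_closed R -> is_ideal R I ->
  forall j, ideal_pow R I j 0.
Proof.
move=> Rr [_ I0 _ _] [|j] /=; first exact: pO_0.
by exists 0%N, (fun _ => 0), (fun _ => 0); rewrite big_ord0; split=> // k; case: k.
Qed.

Lemma IP_M (R : {pred algC}) (I : {poly algC} -> Prop) : subring_closed R -> is_ideal R I ->
  forall j a p, inRq R a -> ideal_pow R I j p -> ideal_pow R I j (a * p).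
Proof.
move=> Rr HI; elim=> [|j IHj] a p Ha /=; first exact: (pO_M Rr).
case=> n [a' [b' [H ->]]]; exists n, (fun k => a * a' k), b'; split.
  by move=> k; have [H1 H2] := H k; split=> //; apply: IHj.
by rewrite mulr_sumr; apply: eq_bigr => k _; rewrite mulrA.
Qed.

Lemma IP_D (R : {pred algC}) (I : {poly algC} -> Prop) : subring_closed R -> is_ideal R I ->
  forall j p q, ideal_pow R I j p -> ideal_pow R I j q -> ideal_pow R I j (p + q).
Proof.
move=> Rr HI [|j] p q /=; first exact: (pO_D Rr).
case=> n1 [a1 [b1 [H1 ->]]] [n2 [a2 [b2 [H2 ->]]]].
exists (n1 + n2)%N, (fun k => match split k with inl i => a1 i | inr i => a2 i end),
  (fun k => match split k with inl i => b1 i | inr i => b2 i end); split.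
  by move=> k; case: (split k).
rewrite big_split_ord /=; congr (_ + _); apply: eq_bigr => i _.
  by rewrite (unsplitK (inl i)).
by rewrite (unsplitK (inr i)).
Qed.

Lemma IP_N (R : {pred algC}) (I : {poly algC} -> Prop) : subring_closed R -> is_ideal R I ->
  forall j p, ideal_pow R I j p -> ideal_pow R I j (- p).
Proof.
move=> Rr HI j p Hp; rewrite -mulN1r; apply: IP_M => //.
exact: (pO_N Rr (pO_1 Rr)).
Qed.

Lemma IP_B (R : {pred algC}) (I : {poly algC} -> Prop) : subring_closed R -> is_ideal R I ->
  forall j p q, ideal_pow R I j p -> ideal_pow R I j q -> ideal_pow R I j (p - q).
Proof. by move=> Rr HI j p q Hp Hq; apply: IP_D => //; apply: IP_N. Qed.

Lemma IP_sum (R : {pred algC}) (I : {poly algC} -> Prop) : subring_closed R -> is_ideal R I ->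
  forall j (a b : nat) (F : nat -> {poly algC}),
  (forall k, (a <= k)%N -> (k < b)%N -> ideal_pow R I j (F k)) -> ideal_pow R I j (\sum_(a <= k < b) F k).
Proof.
move=> Rr HI j a b F HF; rewrite big_nat_cond.
apply: (big_ind (ideal_pow R I j)) => [|x y|k /andP[/andP[H1 H2] _]]; first exact: IP_0.
  exact: IP_D.
exact: HF.
Qed.

Lemma IP_step (R : {pred algC}) (I : {poly algC} -> Prop) : subring_closed R -> is_ideal R I ->
  forall j p b, ideal_pow R I j p -> I b -> ideal_pow R I j.+1 (p * b).
Proof.
move=> Rr HI j p b Hp Hb /=; exists 1%N, (fun _ => p), (fun _ => b); split=> //.
by rewrite big_ord1.
Qed.

Lemma IP1_I (R : {pred algC}) (I : {poly algC} -> Prop) : subring_closed R -> is_ideal R I ->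
  forall p, ideal_pow R I 1 p -> I p.
Proof.
move=> Rr [Isub I0 Iadd Imul] p /= [n [a [b [H ->]]]].
apply: (big_ind I) => // k _; have [H1 H2] := H k; exact: Imul.
Qed.


Lemma PhiC_cyc n z : n.-primitive_root z -> PhiC n = cyclotomic z n.
Proof. by move=> pz; rewrite /PhiC (Cintr_Cyclotomic pz). Qed.

Lemma PhiC_root n x : (0 < n)%N -> root (PhiC n) x = n.-primitive_root x.
Proof.
move=> n0; case: (C_prim_root_exists n0) => z pz.
by rewrite (PhiC_cyc pz) root_cyclotomic.
Qed.

Lemma prim_uniq m n (x : algC) : m.-primitive_root x -> n.-primitive_root x -> m = n.
Proof.
move=> pm pn; apply/eqP; rewrite eqn_dvd.
by rewrite (prim_order_dvd pm) (prim_expr_order pn) (prim_order_dvd pn) (prim_expr_order pm) !eqxx.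
Qed.

Lemma PhiC_monic n : PhiC n \is monic.
Proof. by rewrite /PhiC monic_map // Cyclotomic_monic. Qed.

Lemma size_PhiC n : (0 < n)%N -> size (PhiC n) = (totient n).+1.
Proof.
move=> n0; case: (C_prim_root_exists n0) => z pz.
by rewrite (PhiC_cyc pz) size_cyclotomic.
Qed.

Lemma size_PhiC_gt1 n : (0 < n)%N -> (1 < size (PhiC n))%N.
Proof. by move=> n0; rewrite size_PhiC // ltnS totient_gt0. Qed.

Lemma PhiC_coprime m t : (0 < m)%N -> (0 < t)%N -> t <> m -> coprimep (PhiC m) (PhiC t).
Proof.
move=> m0 t0 tm; apply: Pdiv.ClosedField.root_coprimep => x; rewrite PhiC_root // => pm.
apply/negP => /eqP r; apply: tm; apply: (prim_uniq (x := x)) => //.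
by rewrite -PhiC_root //; apply/eqP.
Qed.

Lemma prod_nseq (F : nat -> {poly algC}) n m : \prod_(i <- nseq n m) F i = F m ^+ n.
Proof. by elim: n => [|n IH]; rewrite ?big_nil ?expr0 // big_cons IH exprS. Qed.

Lemma PhiS_monic (S : nat -> Prop) f : PhiS S f -> f \is monic.
Proof. by case=> s [_ ->]; apply: monic_prod => i _; apply: PhiC_monic. Qed.

Lemma PhiS_R (R : {pred algC}) (S : nat -> Prop) f : subring_closed R -> PhiS S f -> inRq R f.
Proof. by move=> Rr [s [_ ->]]; apply: (pO_prod Rr) => k; apply: pO_PhiC. Qed.

Lemma PhiS_pow (S : nat -> Prop) m n : S m -> PhiS S (PhiC m ^+ n).
Proof.
move=> Sm; exists (nseq n m); split; last by rewrite prod_nseq.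
by move=> k /nseqP [-> _].
Qed.

Lemma PhiS_1 (S : nat -> Prop) m : S m -> PhiS S (PhiC m).
Proof. by move=> Sm; rewrite -(expr1 (PhiC m)); apply: PhiS_pow. Qed.

Lemma PhiC_coprime_prod m (s : seq nat) : (0 < m)%N ->
  (forall t, t \in s -> (0 < t)%N /\ t <> m) -> coprimep (PhiC m) (\prod_(t <- s) PhiC t).
Proof.
move=> m0; elim: s => [|t s IH] H; first by rewrite big_nil coprimep1.
rewrite big_cons coprimepMr; apply/andP; split.
  by have [t0 tm] := H t (mem_head _ _); apply: PhiC_coprime.
by apply: IH => t' Ht'; apply: H; rewrite inE Ht' orbT.
Qed.

Lemma not_dvd1 (P : {poly algC}) : (1 < size P)%N -> ~ (P %| 1).
Proof. by move=> sP /(dvdp_leq (oner_neq0 _)); rewrite size_poly1 leqNgt sP. Qed.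

Lemma cantor (T : countType) (h : (nat -> bool) -> T) : injective h -> False.
Proof.
move=> hinj.
pose e := fun n => epsilon (inhabits (fun _ : nat => false)) (fun c => pickle (h c) = n).
pose d := fun n => ~~ e n n.
have : pickle (h (e (pickle (h d)))) = pickle (h d).
  by apply: (epsilon_spec (inhabits (fun _ : nat => false)) (fun c => pickle (h c) = pickle (h d))); exists d.
move/(pcan_inj pickleK)/hinj => ed.
have H1 : d (pickle (h d)) = ~~ e (pickle (h d)) (pickle (h d)) by [].
by rewrite ed in H1; move: H1; case: (d _).
Qed.


Lemma IP_pow (R : {pred algC}) (I : {poly algC} -> Prop) : subring_closed R -> is_ideal R I ->
  forall p j, I p -> ideal_pow R I j (p ^+ j).
Proof.
move=> Rr HI p; elim=> [|j IH] Ip; first exact: pO_1.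
by rewrite exprSr; apply: IP_step => //; apply: IH.
Qed.

Lemma roots_many (S : nat -> Prop) (p : {poly algC}) :
  (forall m, S m -> (0 < m)%N) -> (forall n, exists m, (n <= m)%N /\ S m) ->
  (forall m x, S m -> m.-primitive_root x -> root p x) -> p = 0.
Proof.
move=> Spos Sinf Hr.
have H : forall N, exists M rs, [/\ size rs = N, uniq rs, all (root p) rs &
    forall z, z \in rs -> exists k, (k < M)%N /\ k.-primitive_root z].
  elim=> [|N [M [rs [s1 u1 a1 h1]]]]; first by exists 0%N, [::].
  have [m [Mm Sm]] := Sinf M; case: (C_prim_root_exists (Spos _ Sm)) => z pz.
  exists m.+1, (z :: rs); split=> /=; first by rewrite s1.
  - rewrite u1 andbT; apply/negP => /h1 [k [kM pk]].
    by have := prim_uniq pk pz; lia.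
  - by rewrite a1 andbT (Hr m).
  move=> w; rewrite inE => /orP [/eqP -> | /h1 [k [kM pk]]].
    by exists m.
  by exists k; split=> //; lia.
apply/eqP; apply/negPn/negP => p0.
have [M [rs [s1 u1 a1 _]]] := H (size p).
by have := max_poly_roots p0 a1 u1; rewrite s1 ltnn.
Qed.

Lemma dir2 (R : {pred algC}) (S : nat -> Prop) (I : {poly algC} -> Prop) :
  subring_closed R ->
  (forall m, S m -> (0 < m)%N) ->
  (forall n, exists m, (n <= m)%N /\ S m) ->
  is_ideal R I -> induced_iso_I_to_S R S I -> False.
Proof.
move=> Rr Spos Sinf HI [G [HG [_ Hsurj]]].
have Izero : forall p, I p -> p = 0.
  move=> p Ip; apply: (roots_many Spos Sinf) => m x Sm px.
  have HS := PhiS_1 Sm.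
  have rx : root (PhiC m) x by rewrite PhiC_root ?Spos.
  have := root_dvdp (dvdR_dvdp (HG _ HS _ (IP_pow Rr HI (G (PhiC m)) Ip))) rx.
  by rewrite /root horner_exp expf_eq0 => /andP [_].
have IPzero : forall j p, (0 < j)%N -> ideal_pow R I j p -> p = 0.
  move=> [|j] p //= _ [n [a [b [H ->]]]].
  by apply: big1 => k _; have [_ /Izero ->] := H k; rewrite mulr0.
have [m0 [_ Sm0]] := Sinf 0%N.
have m00 := Spos _ Sm0.
pose P := PhiC m0.
pose Q := fun k => \prod_(0 <= t < k) (if t.+1 == m0 then 1 else PhiC t.+1).
pose T := fun k => (P * Q k) ^+ k.
have RT : forall k, inRq R (T k).
  move=> k; apply: (pO_X_ Rr); apply: (pO_M Rr); first exact: pO_PhiC.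
  apply: (pO_prod Rr) => t; case: ifP => _; [exact: pO_1 | exact: pO_PhiC].
have Tdiv : forall f, PhiS S f -> exists N, forall k, (N <= k)%N -> dvdRq R f (T k).
  move=> f Hf; have mf := PhiS_monic Hf; have Rf := PhiS_R Rr Hf.
  case: Hf => s [Hs ef].
  exists (maxn (size s) (\max_(t <- s) t)) => k; rewrite geq_max => /andP [sk mk].
  apply: (dvdR_monic Rr) => //; first exact: RT.
  rewrite ef.
  have Hdiv : forall t, t \in s -> PhiC t %| P * Q k.
    move=> t ts; have t0 := Spos _ (Hs _ ts).
    have tk : (t <= k)%N by apply: leq_trans mk; apply: leq_bigmax_seq.
    have [-> | tm] := eqVneq t m0; first exact: dvdp_mulIl.
    apply: dvdp_mull; rewrite /Q (bigD1_seq t.-1) /=; last exact: iota_uniq.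
      by rewrite prednK // (negPf tm); apply: dvdp_mulIl.
    by rewrite mem_index_iota; lia.
  apply: (@dvdp_trans _ ((P * Q k) ^+ size s)); last exact: dvdp_exp2l.
  elim: s Hs Hdiv {ef sk mk} => [|t s IH] Hs Hdiv; first by rewrite big_nil dvd1p.
  rewrite big_cons /= exprS; apply: dvdp_mul; first by apply: Hdiv; apply: mem_head.
  by apply: IH => [t' Ht'|t' Ht']; [apply: Hs | apply: Hdiv]; rewrite inE Ht' orbT.
pose N := fun f => epsilon (inhabits 0%N) (fun N => forall k, (N <= k)%N -> dvdRq R f (T k)).
have NP : forall f, PhiS S f -> forall k, (N f <= k)%N -> dvdRq R f (T k).
  move=> f Hf; exact: (epsilon_spec (inhabits 0%N) (fun N => forall k, (N <= k)%N -> dvdRq R f (T k)) (Tdiv f Hf)).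
pose X := fun (c : nat -> bool) f => \sum_(0 <= k < N f) ((c k)%:R : {poly algC}) * T k.
have cX : forall c, complS R S (X c).
  move=> c; split=> [f _|f g Hf Hg fg].
    by apply: (pO_sum Rr) => k; apply: (pO_M Rr); [exact: (pO_nat Rr) | exact: RT].
  rewrite /X; case: (leqP (N f) (N g)) => [le|lt].
    rewrite (big_cat_nat (leq0n _) le) /= addrC addrK.
    apply: (dvdR_sum Rr) => k fk _; apply: (dvdR_M Rr); first exact: (pO_nat Rr).
    exact: NP.
  rewrite [X in _ - X](big_cat_nat (leq0n _) (ltnW lt)) /= opprD addrA subrr sub0r.
  apply: (dvdR_N Rr); apply: (dvdR_sum Rr) => k gk _; apply: (dvdR_M Rr); first exact: (pO_nat Rr).
  by apply: (dvdR_trans Rr fg); apply: NP.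
have Hy : forall c, exists y, complI R I y /\ eqS R S (fun f => y (G f)) (X c).
  by move=> c; have [y H1 H2] := Hsurj _ (cX c); exists y.
pose Y := fun c => proj1_sig (constructive_indefinite_description _ (Hy c)).
have YP : forall c, complI R I (Y c) /\ eqS R S (fun f => Y c (G f)) (X c).
  by move=> c; exact: (proj2_sig (constructive_indefinite_description _ (Hy c))).
apply: (@cantor _ (fun c => Y c 1%N)) => c c' E.
apply: functional_extensionality => k1; apply/eqP; apply/negPn/negP => Hk1.
case: (ex_minnP (ex_intro (fun k => c k != c' k) k1 Hk1)) => k0 Hk0 kmin.
pose f := P ^+ k0.+1.
have Hf : PhiS S f := PhiS_pow _ Sm0.
have P1 : (1 < size P)%N by apply: size_PhiC_gt1.
have Pf : P %| f by rewrite /f -{1}(expr1 P); apply: dvdp_exp2l.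
have Gf : (0 < G f)%N.
  case E0: (G f) => [|//]; exfalso.
  have := HG _ Hf 1; rewrite E0 => /(_ (pO_1 Rr)) /dvdR_dvdp f1.
  by apply: (not_dvd1 P1); apply: dvdp_trans Pf f1.
have YG : forall c, Y c (G f) = Y c 1%N.
  move=> c2; have [[_ Hc] _] := YP c2.
  by apply/eqP; rewrite -subr_eq0; apply/eqP; apply: (IPzero 1%N) => //; apply: Hc.
have D1 : f %| X c f - X c' f.
  have [_ e1] := YP c; have [_ e2] := YP c'.
  have := dvdR_dvdp (dvdR_B Rr (e2 f Hf) (e1 f Hf)).
  by rewrite /= !YG E opprB addrC addrA subrK.
set M := maxn (N f) k0.+1.
have D2 : f %| \sum_(0 <= k < M) (((c k)%:R - (c' k)%:R) : {poly algC}) * T k.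
  rewrite (big_cat_nat (leq0n _) (leq_maxl (N f) k0.+1)) /=.
  apply: dvdp_add.
    move: D1; rewrite /X -sumrB; congr (_ %| _); apply: eq_bigr => k _.
    by rewrite mulrBl.
  apply: dvdR_dvdp; apply: (dvdR_sum Rr) => k fk _; apply: (dvdR_M Rr).
    by apply: (pO_B Rr); apply: (pO_nat Rr).
  exact: NP.
have Tdk : forall k, (k0 < k)%N -> f %| T k.
  move=> k kk; rewrite /T exprMn; apply: dvdp_mulr; exact: dvdp_exp2l.
have D3 : f %| (((c k0)%:R - (c' k0)%:R) : {poly algC}) * T k0.
  move: D2; rewrite (big_cat_nat (leq0n k0) (leq_trans (leqnSn k0) (leq_maxr _ _))) /=.
  rewrite big1_seq; last first.
    move=> k /andP [_]; rewrite mem_index_iota => /andP [_ kk].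
    have : c k = c' k by apply/eqP; apply/negPn/negP => /kmin; rewrite leqNgt kk.
    by move=> ->; rewrite subrr mul0r.
  rewrite add0r big_ltn; last by rewrite leq_max ltnSn orbT.
  rewrite dvdp_addl //; rewrite big_nat_cond.
  apply: (big_ind (fun x => f %| x)) => [|x y|k /andP [/andP [kk _] _]]; first exact: dvdp0.
    exact: dvdp_add.
  by apply: dvdp_mull; apply: Tdk.
have dd : ((((c k0)%:R - (c' k0)%:R) : {poly algC}) * (((c k0)%:R - (c' k0)%:R))) = 1.
  by move: Hk0; case: (c k0); case: (c' k0) => //= _; rewrite ?subr0 ?sub0r ?mulr1 ?mulNr ?mulrN ?opprK ?mulr1.
have D4 : f %| T k0 by rewrite -[T k0]mul1r -dd -mulrA; apply: dvdp_mull.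
move: D4; rewrite /f /T exprMn exprSr dvdp_mul2l; last by rewrite monic_neq0 // monic_exp // PhiC_monic.
have cop : coprimep P (Q k0 ^+ k0).
  apply: coprimep_expr; rewrite /Q; apply: (big_ind (coprimep P)).
  - exact: coprimep1.
  - by move=> x y cx cy; rewrite coprimepMr cx cy.
  move=> t _; case: ifP => [_|tm]; first exact: coprimep1.
  by apply: PhiC_coprime => //; move/eqP: tm => tm' ee; apply: tm'; rewrite ee.
rewrite -[Q k0 ^+ k0]mulr1 Gauss_dvdpr // => P_1.
exact: (not_dvd1 P1 P_1).
Qed.


Lemma dir1 (R : {pred algC}) (S : nat -> Prop) (I : {poly algC} -> Prop) :
  subring_closed R ->
  (forall m, S m -> (0 < m)%N) ->
  (forall n, exists m, (n <= m)%N /\ S m) ->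
  is_ideal R I -> induced_iso_S_to_I R S I -> False.
Proof.
move=> Rr Spos Sinf HI [F [HF [Hinj Hsurj]]].
pose u := F 1%N.
have [[s [Hs eu]] Fu1] := HF 1%N.
have uI : I u := IP1_I Rr HI Fu1.
have Ru : inRq R u := IP_R Rr HI Fu1.
have upow : forall i j, (j <= i)%N -> ideal_pow R I j (u ^+ i).
  move=> i j ji; rewrite -(subnK ji) exprD; apply: (IP_M Rr HI); first exact: (pO_X_ Rr).
  exact: (IP_pow Rr HI).
have [m [mm Sm]] := Sinf (\max_(t <- s) t).+1.
have m0 := Spos _ Sm.
pose P := PhiC m.
have HP : PhiS S P := PhiS_1 Sm.
have P1 : (1 < size P)%N by apply: size_PhiC_gt1.
have copu : forall k, coprimep P (u ^+ k).
  move=> k; apply: coprimep_expr; rewrite /u eu; apply: PhiC_coprime_prod => // t ts.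
  split; first exact: Spos (Hs _ ts).
  by move=> tm; move: mm; rewrite -tm ltnNge => /negP; apply; apply: (leq_bigmax_seq (F := fun t => t)).
pose y := fun (c : nat -> {poly algC}) j => \sum_(0 <= k < j) c k * u ^+ k.
have Ry : forall c j, (forall k, inRq R (c k)) -> inRq R (y c j).
  by move=> c j Hc; apply: (pO_sum Rr) => k; apply: (pO_M Rr); [exact: Hc | exact: (pO_X_ Rr)].
have cy : forall c, (forall k, inRq R (c k)) -> complI R I (y c).
  move=> c Hc; split=> [j|j k jk]; first exact: Ry.
  rewrite /y (big_cat_nat (leq0n _) jk) /= addrC addrK.
  apply: (IP_sum Rr HI) => i ji _; apply: (IP_M Rr HI) => //; exact: upow.
have tail : forall (c : nat -> {poly algC}) N x x', (forall k, inRq R (c k)) ->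
    complS R S x -> eqI R I (fun j => x (F j)) (y c) ->
    complS R S x' -> eqI R I (fun j => x' (F j)) (y (fun k => c (k + N)%N)) ->
    P %| x P - y c N - u ^+ N * x' P.
  move=> c N x x' Hc [Rx cx] ex [Rx' cx'] ex'.
  pose X := fun f => x f - y c N - u ^+ N * x' f.
  suff : eqS R S X (fun _ => 0) by move=> /(_ _ HP); rewrite subr0 => /dvdR_dvdp.
  apply: Hinj.
  - split=> [f Hf|f g Hf Hg fg].
      by apply: (pO_B Rr); [apply: (pO_B Rr); [exact: Rx | exact: Ry] | apply: (pO_M Rr); [exact: (pO_X_ Rr) | exact: Rx']].
    have -> : X g - X f = (x g - x f) - u ^+ N * (x' g - x' f) by rewrite /X; ring.
    apply: (dvdR_B Rr); first exact: cx.
    by apply: (dvdR_M Rr); [exact: (pO_X_ Rr) | exact: cx'].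
  - split=> [f Hf|f g Hf Hg fg]; first exact: (pO_0 Rr).
    by rewrite subrr; apply: dvdR_0.
  move=> j /=; rewrite subr0.
  pose Z := \sum_(j <= k < N + j) c k * u ^+ k.
  have EZ : Z = y c N + u ^+ N * y (fun k => c (k + N)%N) j - y c j.
    have e1 : y c (N + j) = y c N + u ^+ N * y (fun k => c (k + N)%N) j.
      rewrite /y (big_cat_nat (leq0n N) (leq_addr j N)) /=; congr (_ + _).
      rewrite -{1}(add0n N) big_addn addKn mulr_sumr; apply: eq_bigr => k _.
      by rewrite exprD; ring.
    have e2 : y c (N + j) = y c j + Z by rewrite /y (big_cat_nat (leq0n j) (leq_addl N j)).
    by rewrite -e1 e2 addrC addKr.
  have -> : X (F j) = (x (F j) - y c j) - u ^+ N * (x' (F j) - y (fun k => c (k + N)%N) j) - Z.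
    by rewrite EZ /X; ring.
  apply: (IP_B Rr HI); first apply: (IP_B Rr HI); first exact: ex.
    by apply: (IP_M Rr HI); [exact: (pO_X_ Rr) | exact: ex'].
  apply: (IP_sum Rr HI) => k jk _; apply: (IP_M Rr HI) => //; exact: upow.
case: (classic (exists r, inRq R r /\ P %| u * r - 1)) => [[r [Rr' Pr]]|Hnu].
  pose c := fun k => r ^+ k.
  have Rc : forall k, inRq R (c k) by move=> k; apply: (pO_X_ Rr).
  have [x [Rx cx] ex] := Hsurj _ (cy c Rc).
  have R1ur : inRq R (1 - u * r) by apply: (pO_B Rr); [exact: (pO_1 Rr) | exact: (pO_M Rr)].
  pose X := fun f => (1 - u * r) * x f.
  suff : eqS R S X (fun _ => 1).
    move=> /(_ _ HP) /dvdR_dvdp D.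
    have D2 : P %| (u * r - 1) * x P by apply: dvdp_mulr.
    have := dvdp_add D D2; rewrite /X.
    have -> : (1 - u * r) * x P - 1 + (u * r - 1) * x P = - 1 by ring.
    by rewrite dvdpNr; apply: not_dvd1.
  apply: Hinj.
  - split=> [f Hf|f g Hf Hg fg]; first by apply: (pO_M Rr) => //; apply: Rx.
    by rewrite /X -mulrBr; apply: (dvdR_M Rr) => //; apply: cx.
  - split=> [f Hf|f g Hf Hg fg]; first exact: (pO_1 Rr).
    by rewrite subrr; apply: dvdR_0.
  move=> j /=.
  have Eg : (1 - u * r) * y c j = 1 - r ^+ j * u ^+ j.
    have -> : y c j = \sum_(i < j) (u * r) ^+ i.
      by rewrite /y big_mkord; apply: eq_bigr => k _; rewrite exprMn /c mulrC.
    have -> : r ^+ j * u ^+ j = (u * r) ^+ j by rewrite exprMn mulrC.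
    have -> : (u * r) ^+ j = (u * r - 1) * \sum_(i < j) (u * r) ^+ i + 1.
      by rewrite -subrX1 subrK.
    ring.
  have -> : X (F j) - 1 = (1 - u * r) * (x (F j) - y c j) - r ^+ j * u ^+ j.
    by rewrite /X mulrBr Eg; ring.
  apply: (IP_B Rr HI); first by apply: (IP_M Rr HI) => //; apply: ex.
  by apply: (IP_M Rr HI); [exact: (pO_X_ Rr) | exact: upow].
pose cb := fun (b : nat -> bool) k => ((b k)%:R : {poly algC}).
have Rcb : forall b k, inRq R (cb b k) by move=> b k; apply: (pO_nat Rr).
have Hl : forall b, exists x, complS R S x /\ eqI R I (fun j => x (F j)) (y (cb b)).
  by move=> b; have [x H1 H2] := Hsurj _ (cy _ (Rcb b)); exists x.
pose L := fun b => proj1_sig (constructive_indefinite_description _ (Hl b)).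
have LP : forall b, complS R S (L b) /\ eqI R I (fun j => L b (F j)) (y (cb b)).
  by move=> b; exact: (proj2_sig (constructive_indefinite_description _ (Hl b))).
apply: (@cantor _ (fun b => L b P %% P)) => b b' E.
apply: functional_extensionality => k1; apply/eqP; apply/negPn/negP => Hk1.
case: (ex_minnP (ex_intro (fun k => b k != b' k) k1 Hk1)) => k0 Hk0 kmin.
pose sh := fun (b0 : nat -> bool) k => b0 (k + k0.+1)%N.
have T1 := tail (cb b) k0.+1 (L b) (L (sh b)) (Rcb b) (LP b).1 (LP b).2 (LP (sh b)).1 (LP (sh b)).2.
have T2 := tail (cb b') k0.+1 (L b') (L (sh b')) (Rcb b') (LP b').1 (LP b').2 (LP (sh b')).1 (LP (sh b')).2.
have T3 : P %| L b P - L b' P.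
  have -> : L b P - L b' P = (L b P %/ P - L b' P %/ P) * P.
    by rewrite {1}(divp_eq (L b P) P) {1}(divp_eq (L b' P) P) E; ring.
  exact: dvdp_mulIr.
set A := L (sh b) P; set A' := L (sh b') P.
pose d := cb b k0 - cb b' k0.
have Ey : y (cb b) k0.+1 - y (cb b') k0.+1 = d * u ^+ k0.
  rewrite /y -sumrB big_nat_recr //= big1_seq ?add0r; first by rewrite /d mulrBl.
  move=> k /andP [_]; rewrite mem_index_iota => /andP [_ kk].
  have : b k = b' k by apply/eqP; apply/negPn/negP => /kmin; rewrite leqNgt kk.
  by rewrite /cb => ->; rewrite subrr.
have T4 : P %| u ^+ k0 * (d + u * (A - A')).
  have := dvdp_sub (dvdp_sub T1 T2) T3.
  have -> : L b P - y (cb b) k0.+1 - u ^+ k0.+1 * A - (L b' P - y (cb b') k0.+1 - u ^+ k0.+1 * A')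
     - (L b P - L b' P) = - ((y (cb b) k0.+1 - y (cb b') k0.+1) + u ^+ k0.+1 * (A - A')) by ring.
  by rewrite dvdpNr Ey exprSr; congr (_ %| _); ring.
rewrite Gauss_dvdpr // in T4.
have dd : d * d = 1.
  by rewrite /d /cb; move: Hk0; case: (b k0); case: (b' k0) => //= _; ring.
apply: Hnu; exists (- (d * (A - A'))); split.
  have HA : forall b0, inRq R (L b0 P) by move=> b0; apply: (LP b0).1.1.
  apply: (pO_N Rr); apply: (pO_M Rr).
    by apply: (pO_B Rr); apply: (pO_nat Rr).
  by apply: (pO_B Rr); apply: HA.
have := dvdp_mull d T4.
have -> : d * (d + u * (A - A')) = - (u * - (d * (A - A')) - 1) by rewrite mulrDr dd; ring.
by rewrite dvdpNr.
Qed.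

Unset Implicit Arguments.

Theorem proposition6p2 (R : {pred algC}) (S : nat -> Prop) :
  subring_closed R ->
  (forall m, S m -> (0 < m)%N) ->
  (forall n, exists m, (n <= m)%N /\ S m) ->
  ~ (exists I : {poly algC} -> Prop, is_ideal R I /\ id_induces_iso R S I).
Proof.
move=> Rr Spos Sinf [I [HI [H|H]]].
  exact: (dir1 Rr Spos Sinf HI H).
exact: (dir2 Rr Spos Sinf HI H).
Qed.
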